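(* Let $S$ be a semigroup and $T$ a finite semigroup with $T^2=T$. If $S$ is $U(\mathrm{CF})$ then $S\times T$ is $U(\mathrm{CF})$; if $S$ is $U(\mathrm{DCF})$ then $S\times T$ is $U(\mathrm{DCF})$.
   Context: For a semigroup $S$ generated by a finite set $A$, $\mathrm{WP}(S,A)=\{u\#v^{\mathrm{rev}} : u,v\in A^+,\ u=_S v\}$, where $\#\notin A$ and $v^{\mathrm{rev}}$ is the reversal of $v$. A semigroup is $U(\mathrm{CF})$ (resp. $U(\mathrm{DCF})$) if it is finitely generated and its word problem with respect to some (equivalently any) finite generating set is context-free (resp. deterministic context-free). A semigroup $T$ is decomposable if $T^2=T$. *)

(* Defs.v *)
From Stdlib Require List.
From mathcomp Require Import all_boot.
From Stdlib Require Import Relation_Operators.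
Set Implicit Arguments. Unset Strict Implicit. Unset Printing Implicit Defensive.

Record cfg (Tm : Type) := CFG {
  cfg_nt : finType;
  cfg_start : cfg_nt;
  cfg_rules : list (cfg_nt * list (cfg_nt + Tm))
}.

Unset Implicit Arguments.
Inductive cfg_step (Tm : Type) (G : cfg Tm) :
    list (cfg_nt G + Tm) -> list (cfg_nt G + Tm) -> Prop :=
  | CfgStep (l r alpha : list (cfg_nt G + Tm)) (X : cfg_nt G) :
      List.In (X, alpha) (cfg_rules G) ->
      cfg_step Tm G (l ++ inl X :: r) (l ++ alpha ++ r).

Set Implicit Arguments.
Definition cfg_lang (Tm : Type) (G : cfg Tm) (w : list Tm) : Prop :=
  clos_refl_trans _ (cfg_step Tm G) [:: inl (cfg_start G)] (map inr w).

Definition context_free (A : finType) (L : list A -> Prop) : Prop :=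
  exists G : cfg A, forall w, cfg_lang G w <-> L w.

(* Deterministic pushdown automaton, acceptance by final state.
   Stack top is the head of the list. [dpda_delta q None X] is an
   epsilon-move; determinism: at most one move in every situation. *)
Record dpda (A : Type) := DPDA {
  dpda_Q : finType;
  dpda_G : finType;
  dpda_q0 : dpda_Q;
  dpda_Z0 : dpda_G;
  dpda_final : pred dpda_Q;
  dpda_delta : dpda_Q -> option A -> dpda_G -> option (dpda_Q * list dpda_G);
  dpda_det : forall q X, dpda_delta q None X <> None ->
               forall a, dpda_delta q (Some a) X = None
}.

Unset Implicit Arguments.
Definition dpda_conf (A : Type) (M : dpda A) : Type :=
  (dpda_Q M * list A * list (dpda_G M))%type.

Unset Implicit Arguments.
Inductive dpda_step (A : Type) (M : dpda A) : dpda_conf A M -> dpda_conf A M -> Prop :=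
  | DStepRead q a w X gam p alpha :
      @dpda_delta A M q (Some a) X = Some (p, alpha) ->
      dpda_step A M (q, a :: w, X :: gam) (p, w, alpha ++ gam)
  | DStepEps q w X gam p alpha :
      @dpda_delta A M q None X = Some (p, alpha) ->
      dpda_step A M (q, w, X :: gam) (p, w, alpha ++ gam).

Set Implicit Arguments.
Definition dpda_lang (A : Type) (M : dpda A) (w : list A) : Prop :=
  exists (p : dpda_Q M) (gam : list (dpda_G M)),
    clos_refl_trans _ (dpda_step A M) (dpda_q0 M, w, [:: dpda_Z0 M]) (p, [::], gam)
    /\ @dpda_final A M p.

Definition det_context_free (A : finType) (L : list A -> Prop) : Prop :=
  exists M : dpda A, forall w, dpda_lang M w <-> L w.

Definition word_val (S : Type) (mul : S -> S -> S) (X : Type) (phi : X -> S)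
    (w : list X) : option S :=
  match w with
  | [::] => None
  | a :: w' => Some (foldl (fun s b => mul s (phi b)) (phi a) w')
  end.

Definition generates (S : Type) (mul : S -> S -> S) (X : finType) (phi : X -> S) : Prop :=
  injective phi /\ forall s : S, exists w : list X, word_val mul phi w = Some s.

(* WP(S,A) = { u # v^rev : u, v in A^+, u =_S v } over the alphabet A + {#},
   where # is encoded as None and the letter a as Some a. *)
Definition word_problem (S : Type) (mul : S -> S -> S) (X : finType) (phi : X -> S)
    (x : list (option X)) : Prop :=
  exists u v : list X, u <> [::] /\ v <> [::] /\
    x = map Some u ++ None :: rev (map Some v) /\
    word_val mul phi u = word_val mul phi v.

Definition U_CF (S : Type) (mul : S -> S -> S) : Prop :=
  exists (X : finType) (phi : X -> S),
    generates mul phi /\ context_free (word_problem mul phi).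

Definition U_DCF (S : Type) (mul : S -> S -> S) : Prop :=
  exists (X : finType) (phi : X -> S),
    generates mul phi /\ det_context_free (word_problem mul phi).

Definition prod_mul (S T : Type) (mulS : S -> S -> S) (mulT : T -> T -> T)
    (x y : S * T) : S * T := (mulS x.1 y.1, mulT x.2 y.2).

(* Main.v *)
Require Import Defs.
From mathcomp Require Import all_boot.
From Stdlib Require Import Relation_Operators Operators_Properties.
Set Implicit Arguments. Unset Strict Implicit. Unset Printing Implicit Defensive.

Lemma In_mem (T : eqType) (x : T) (s : seq T) : x \in s -> List.In x s.
Proof. elim: s => //= y s IH; rewrite in_cons => /orP [/eqP ->|/IH]; auto. Qed.

Lemma In_enum (T : finType) (x : T) : List.In x (enum T).
Proof. apply: In_mem; by rewrite mem_enum. Qed.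

Lemma map_eq_app (A B : Type) (f : A -> B) (l : seq A) (l1 l2 : seq B) :
  map f l = l1 ++ l2 -> exists l1' l2', [/\ l = l1' ++ l2', map f l1' = l1 & map f l2' = l2].
Proof.
elim: l1 l => [|b l1 IH] l /=; first by move=> <-; exists [::], l.
case: l => //= a l [<- /IH [l1' [l2' [-> <- <-]]]]; by exists (a :: l1'), l2'.
Qed.

Section Gen.
Variable Tm : Type.
Variable G : cfg Tm.

Inductive gen : list (cfg_nt G + Tm) -> list Tm -> Prop :=
| gen_nil : gen [::] [::]
| gen_t a b w : gen b w -> gen (inr a :: b) (a :: w)
| gen_nt X al b w1 w2 : List.In (X, al) (cfg_rules G) -> gen al w1 -> gen b w2 ->
    gen (inl X :: b) (w1 ++ w2).

Lemma gen_app_l a b w1 w2 : gen a w1 -> gen b w2 -> gen (a ++ b) (w1 ++ w2).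
Proof.
move=> H; elim: H w2 => //= [a0 b0 w Hb IH|X al b0 u1 u2 HX Hal _ _ IH] w2 Hw.
  by constructor; apply: IH.
by rewrite -catA; apply: gen_nt HX Hal (IH _ Hw).
Qed.

Lemma gen_app_r a b w : gen (a ++ b) w -> exists w1 w2, w = w1 ++ w2 /\ gen a w1 /\ gen b w2.
Proof.
elim: a w => [|s a IH] w /= H.
  by exists [::], w; split => //; split => //; constructor.
inversion H as [|a0 b0 w0 Hg|X al b0 u1 u2 HX Hal Hg]; subst.
  have [w1 [w2 [-> [Ha Hb]]]] := IH _ Hg.
  by exists (a0 :: w1), w2; split => //; split => //; constructor.
have [v1 [v2 [-> [Ha Hb]]]] := IH _ Hg.
by exists (u1 ++ v1), v2; rewrite catA; split => //; split => //; apply: gen_nt HX Hal Ha.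
Qed.

Lemma gen_map w : gen (map inr w) w.
Proof. by elim: w => [|a w IH] /=; constructor. Qed.

Lemma gen_step a b w : cfg_step Tm G a b -> gen b w -> gen a w.
Proof.
case=> l r al X HX H.
have [w1 [w23 [-> [H1 H23]]]] := gen_app_r H.
have [w2 [w3 [-> [H2 H3]]]] := gen_app_r H23.
apply: gen_app_l => //.
by apply: gen_nt HX H2 H3.
Qed.

Lemma rt_gen a w : clos_refl_trans _ (cfg_step Tm G) a (map inr w) -> gen a w.
Proof.
move/clos_rt_rt1n_iff => H.
remember (map inr w) as c eqn:Ec.
elim: H Ec => [x ->|x y z Hxy _ IH Ec]; first exact: gen_map.
exact: gen_step Hxy (IH Ec).
Qed.

Lemma rt_congr l r a b : clos_refl_trans _ (cfg_step Tm G) a b ->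
  clos_refl_trans _ (cfg_step Tm G) (l ++ a ++ r) (l ++ b ++ r).
Proof.
elim => [x y H|x|x y z _ IH1 _ IH2].
- apply: rt_step; case: H => l0 r0 al X HX.
  have := CfgStep Tm G (l ++ l0) (r0 ++ r) al X HX.
  by rewrite -!catA.
- exact: rt_refl.
- exact: rt_trans IH1 IH2.
Qed.

Lemma gen_rt a w : gen a w -> clos_refl_trans _ (cfg_step Tm G) a (map inr w).
Proof.
elim => [|a0 b w0 _ IH|X al b w1 w2 HX _ IH1 _ IH2].
- exact: rt_refl.
- by have := rt_congr [:: inr a0] [::] IH; rewrite /= !cats0.
- apply: rt_trans (_ : clos_refl_trans _ _ _ (al ++ b)) _.
    apply: rt_step; exact: (CfgStep Tm G [::] b al X HX).
  rewrite map_cat.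
  apply: rt_trans (_ : clos_refl_trans _ _ _ (map inr w1 ++ b)) _.
    by have := rt_congr [::] b IH1.
  by have := rt_congr (map inr w1) [::] IH2; rewrite !cats0.
Qed.

Lemma cfg_lang_gen w : cfg_lang G w <-> gen [:: inl (cfg_start G)] w.
Proof. split; [exact: rt_gen | exact: gen_rt]. Qed.

Lemma gen1 X w : gen [:: inl X] w <-> exists al, List.In (X, al) (cfg_rules G) /\ gen al w.
Proof.
split.
  move=> H; inversion H; subst; exists al; split => //.
  by inversion H5; subst; rewrite cats0.
by case=> al [HX H]; rewrite -[w]cats0; apply: gen_nt HX H gen_nil.
Qed.

End Gen.
Arguments gen {Tm} G _ _.

Section Prod.
Variables (Tm Tm' Qd : finType) (h : Tm' -> Tm) (dl : Qd -> Tm' -> Qd)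
  (d0 : Qd) (fin : pred Qd) (G : cfg Tm).

Definition run (p : Qd) (w : seq Tm') := foldl dl p w.

Definition N' : finType := option (Qd * (cfg_nt G + Tm) * Qd)%type.
Definition sym' := (N' + Tm')%type.

Fixpoint threads (p q : Qd) (al : seq (cfg_nt G + Tm)) : seq (seq sym') :=
  match al with
  | [::] => if p == q then [:: [::]] else [::]
  | s :: al' => List.flat_map (fun r =>
       List.map (fun rest => (inl (Some (p, s, r)) : sym') :: rest) (threads r q al'))
       (enum Qd)
  end.

Lemma threads_nil p q g : List.In g (threads p q [::]) <-> g = [::] /\ p = q.
Proof.
rewrite /=; case: eqP => [->|ne] /=.
  split; [by case=> // <- | by case=> ->; left].
by split => // -[_ /ne].
Qed.

Lemma threads_cons p q s al g : List.In g (threads p q (s :: al)) <->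
  exists r g', g = inl (Some (p, s, r)) :: g' /\ List.In g' (threads r q al).
Proof.
rewrite /= List.in_flat_map; split.
  case=> r [_ /List.in_map_iff [g' [<- Hg']]]; by exists r, g'.
case=> r [g' [-> Hg']]; exists r; split; first exact: In_enum.
by apply/List.in_map_iff; exists g'.
Qed.

Definition rules' : seq (N' * seq sym') :=
  List.flat_map (fun f => if fin f then
      [:: ((None : N'), [:: (inl (Some (d0, inl (cfg_start G), f)) : sym')])] else [::]) (enum Qd)
  ++ List.flat_map (fun XA => List.flat_map (fun p => List.flat_map (fun q =>
        List.map (fun g => ((Some (p, inl XA.1, q) : N'), g)) (threads p q XA.2))
        (enum Qd)) (enum Qd)) (cfg_rules G)
  ++ List.flat_map (fun b => List.map (fun p =>
        ((Some (p, inr (h b), dl p b) : N'), [:: (inr b : sym')])) (enum Qd)) (enum Tm').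

Definition G' : cfg Tm' := @CFG Tm' N' None rules'.

Lemma rules'_In (Y : N') g : List.In (Y, g) rules' <->
  [\/ exists f, [/\ Y = None, fin f & g = [:: inl (Some (d0, inl (cfg_start G), f))]],
      exists X al p q, [/\ Y = Some (p, inl X, q), List.In (X, al) (cfg_rules G) &
                         List.In g (threads p q al)]
    | exists b p, Y = Some (p, inr (h b), dl p b) /\ g = [:: inr b]].
Proof.
rewrite /rules' !List.in_app_iff !List.in_flat_map; split.
- case=> [[f [_ Hf]]|[[[X al] [Hr /List.in_flat_map [p [_ /List.in_flat_map [q [_ /List.in_map_iff [g' [[<- <-] Hg]]]]]]]]|[b [_ /List.in_map_iff [p [[<- <-] _]]]]]].
  + move: Hf; case Ef: (fin f) => //= -[[<- <-]|//]; constructor 1; by exists f.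
  + constructor 2; by exists X, al, p, q.
  + constructor 3; by exists b, p.
- case=> [[f [-> Ef ->]]|[X [al [p [q [-> Hr Hg]]]]]|[b [p [-> ->]]]].
  + left; exists f; split; first exact: In_enum; by rewrite Ef; left.
  + right; left; exists (X, al); split => //.
    apply/List.in_flat_map; exists p; split; first exact: In_enum.
    apply/List.in_flat_map; exists q; split; first exact: In_enum.
    by apply/List.in_map_iff; exists g.
  + right; right; exists b; split; first exact: In_enum.
    by apply/List.in_map_iff; exists p; split => //; exact: In_enum.
Qed.

Lemma sound g w : gen G' g w -> forall p q al, List.In g (threads p q al) ->
  gen G al (map h w) /\ run p w = q.
Proof.
elim=> [|b g0 w0 _ _|Y al' b w1 w2 HY Hal' IH1 Hb IH2] p q al.
- case: al => [/threads_nil [_ ->]|s al /threads_cons [r [g' [//]]]].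
  split => //; constructor.
- case: al => [/threads_nil [//]|s al /threads_cons [r [g' [//]]]].
- case: al => [/threads_nil [//]|s al /threads_cons [r [g' [[= EY Eb] Hg']]]].
  subst Y b.
  have [IHa IHb] := IH2 _ _ _ Hg'.
  case/rules'_In: HY => [[f [//]]|[X [al0 [p' [q' [[= Ep Es Er] Hr Hg]]]]]|[b' [p' [[= Ep Es Er] Eg]]]]; subst.
  + have [H1 H2] := IH1 _ _ _ Hg.
    rewrite map_cat; split; first exact: gen_nt Hr H1 IHa.
    by rewrite -H2 /run foldl_cat.
  + inversion Hal' as [|b1 b2 w3 Hn|]; subst.
    inversion Hn; subst => /=; split => //; by constructor.
Qed.

Lemma complete al v : gen G al v -> forall w p, v = map h w ->
  exists g, List.In g (threads p (run p w) al) /\ gen G' g w.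
Proof.
elim=> [|a b v0 _ IH|X al0 b v1 v2 Hr _ IH1 _ IH2] w p Ev.
- case: w Ev => // _; exists [::]; split; first by apply/threads_nil.
  constructor.
- case: w Ev => // b0 w [Ea Ev].
  have [g [Hg Hgen]] := IH w (dl p b0) Ev.
  exists (inl (Some (p, inr a, dl p b0)) :: g); split.
    by apply/threads_cons; exists (dl p b0), g.
  apply: (@gen_nt _ G' _ [:: inr b0] g [:: b0] w); last exact: Hgen; last by do 2 constructor.
  by apply/rules'_In; constructor 3; exists b0, p; rewrite Ea.
- move/esym: Ev => /map_eq_app [w1 [w2 [-> E1 E2]]].
  have [g1 [Hg1 Hgen1]] := IH1 w1 p (esym E1).
  have [g2 [Hg2 Hgen2]] := IH2 w2 (run p w1) (esym E2).
  exists (inl (Some (p, inl X, run p w1)) :: g2); split.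
    apply/threads_cons; exists (run p w1), g2; split => //.
    by rewrite /run foldl_cat.
  apply: gen_nt Hgen1 Hgen2.
  by apply/rules'_In; constructor 2; exists X, al0, p, (run p w1).
Qed.

Lemma lang' w : cfg_lang G' w <-> cfg_lang G (map h w) /\ fin (run d0 w).
Proof.
rewrite !cfg_lang_gen /=; split.
- case/gen1 => g [/rules'_In [[f [_ Ef ->]]|[? [? [? [? [//]]]]]|[? [? [//]]]] H].
  have := @sound _ _ H d0 f [:: inl (cfg_start G)].
  case.
    by apply/threads_cons; exists f, [::]; split => //; apply/threads_nil.
  by move=> ? ->.
- case=> H Ef.
  have [g [/threads_cons [r [g' [-> /threads_nil [Eg Er]]]] Hg]] := complete H d0 (erefl _).
  subst g' r.
  apply/gen1; exists [:: inl (Some (d0, inl (cfg_start G), run d0 w))]; split => //.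
  by apply/rules'_In; constructor 1; exists (run d0 w).
Qed.

End Prod.

Lemma cf_prod (Tm Tm' Qd : finType) (h : Tm' -> Tm) (dl : Qd -> Tm' -> Qd)
  (d0 : Qd) (fin : pred Qd) (L : seq Tm -> Prop) :
  context_free L -> context_free (fun w => L (map h w) /\ fin (foldl dl d0 w)).
Proof.
case=> G HG; exists (G' h dl d0 fin G) => w.
by rewrite lang' HG.
Qed.

Section DProd.
Variables (A A' Qd : finType) (h : A' -> A) (dl : Qd -> A' -> Qd)
  (d0 : Qd) (fin : pred Qd) (M : dpda A).

Definition Q' : finType := (dpda_Q M * Qd)%type.

Definition delta' (s : Q') (o : option A') (X : dpda_G M) : option (Q' * seq (dpda_G M)) :=
  match o with
  | Some b => match dpda_delta (d:=M) s.1 (Some (h b)) X with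
              | Some (p, al) => Some ((p, dl s.2 b), al)
              | None => None end
  | None => match dpda_delta (d:=M) s.1 None X with
              | Some (p, al) => Some ((p, s.2), al)
              | None => None end
  end.

Lemma delta'_det q X : delta' q None X <> None -> forall a, delta' q (Some a) X = None.
Proof.
rewrite /delta' => H a.
case E: (dpda_delta q.1 None X) H => [[p al]|] // _.
have -> := @dpda_det _ M q.1 X; first by [].
by rewrite E.
Qed.

Definition M' : dpda A' :=
  @DPDA A' Q' (dpda_G M) (dpda_q0 M, d0) (dpda_Z0 M)
    (fun s => dpda_final (d:=M) s.1 && fin s.2) delta' delta'_det.

Lemma fwd (c1 c2 : dpda_conf A' M') : clos_refl_trans _ (dpda_step A' M') c1 c2 ->
  clos_refl_trans _ (dpda_step A M) (c1.1.1.1, map h c1.1.2, c1.2) (c2.1.1.1, map h c2.1.2, c2.2)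
  /\ exists u, c1.1.2 = u ++ c2.1.2 /\ c2.1.1.2 = foldl dl c1.1.1.2 u.
Proof.
move/clos_rt_rt1n_iff; elim=> [x|x y z Hxy _ [IH1 [u [Eu Ez]]]].
  split; first exact: rt_refl. by exists [::].
case: Hxy Eu Ez IH1 => [[q d] a w X gam [p e] al|[q d] w X gam [p e] al] /= Hd Eu Ez IH1.
- move: Hd; rewrite /=/delta' /=.
  case E: (dpda_delta q (Some (h a)) X) => [[p' al']|] // [= Ep Ee Eal]; subst.
  split.
    apply: rt_trans IH1; apply: rt_step; exact: DStepRead E.
  by exists (a :: u).
- move: Hd; rewrite /=/delta' /=.
  case E: (dpda_delta q None X) => [[p' al']|] // [= Ep Ee Eal]; subst.
  split.
    apply: rt_trans IH1; apply: rt_step; exact: DStepEps E.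
  by exists u.
Qed.

Lemma bwd (c1 c2 : dpda_conf A M) : clos_refl_trans _ (dpda_step A M) c1 c2 ->
  forall q d w gam, c1 = (q, map h w, gam) ->
  exists w2, c2.1.2 = map h w2 /\ exists u, w = u ++ w2 /\
   clos_refl_trans _ (dpda_step A' M') ((q, d), w, gam) ((c2.1.1, foldl dl d u), w2, c2.2).
Proof.
move/clos_rt_rt1n_iff; elim=> [x|x y z Hxy _ IH] q d w gam Ex.
  subst x; exists w; split => //; exists [::]; split => //; exact: rt_refl.
case: Hxy IH Ex => [q0 a w0 X gam0 p al|q0 w0 X gam0 p al] Hd IH Ex.
- case: Ex => Eq Ew Eg; subst q0 gam.
  case: w Ew => // b w' [Ea Ew]; subst w0.
  have [w2 [E2 [u [Eu Hrt]]]] := IH p (dl d b) w' (al ++ gam0) erefl.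
  exists w2; split => //; exists (b :: u); split; first by rewrite Eu.
  apply: rt_trans Hrt; apply: rt_step; apply: DStepRead => /=.
  by rewrite /delta' /= -Ea Hd.
- case: Ex => Eq Ew Eg; subst q0 gam.
  subst w0.
  have [w2 [E2 [u [Eu Hrt]]]] := IH p d w (al ++ gam0) erefl.
  exists w2; split => //; exists u; split => //.
  apply: rt_trans Hrt; apply: rt_step; apply: DStepEps => /=.
  by rewrite /delta' /= Hd.
Qed.

Lemma dlang' w : dpda_lang M' w <-> dpda_lang M (map h w) /\ fin (foldl dl d0 w).
Proof.
split.
- case=> [[p e] [gam [H /andP [F1 F2]]]].
  have [H1 [u [Eu Ee]]] := fwd H.
  move: H1 Eu Ee => /= H1; rewrite cats0 => <- Ee.
  split; last by rewrite -Ee.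
  by exists p, gam.
- case=> [[p [gam [H F]]] Fw].
  have [w2 [E2 [u [Eu Hrt]]]] := bwd H d0 (erefl _).
  case: w2 E2 Eu Hrt => // _; rewrite cats0 => <- Hrt.
  exists (p, foldl dl d0 w), gam; split => //.
  by rewrite /= F.
Qed.

End DProd.

Lemma dcf_prod (A A' Qd : finType) (h : A' -> A) (dl : Qd -> A' -> Qd)
  (d0 : Qd) (fin : pred Qd) (L : seq A -> Prop) :
  det_context_free L -> det_context_free (fun w => L (map h w) /\ fin (foldl dl d0 w)).
Proof.
case=> M HM; exists (M' h dl d0 fin M) => w.
by rewrite dlang' HM.
Qed.
Section Semi.
Variables (S : Type) (mulS : S -> S -> S) (assocS : associative mulS)
    (T : finType) (mulT : T -> T -> T) (assocT : associative mulT)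
    (decT : forall t : T, exists a b : T, t = mulT a b).
Variables (X : finType) (phi : X -> S).

Definition X' : finType := (X * T)%type.
Definition phi' (p : X') : S * T := (phi p.1, p.2).
Definition hh (c : option X') : option X := omap fst c.
Definition Qd : finType := (bool * option T * option T)%type.
Definition catv (x y : option T) : option T :=
  match x, y with
  | None, _ => y
  | _, None => x
  | Some a, Some b => Some (mulT a b)
  end.
Definition dl (st : Qd) (c : option X') : Qd :=
  match c with
  | None => (true, st.1.2, st.2)
  | Some b => if st.1.1 then (true, st.1.2, catv (Some b.2) st.2)
              else (false, catv st.1.2 (Some b.2), st.2)
  end.
Definition d0 : Qd := (false, None, None).
Definition finQ (st : Qd) : bool := st.1.1 && (st.1.2 == st.2).

Definition valT (u : seq X') := word_val mulT snd u.

Lemma catvA : associative catv.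
Proof. by case=> [a|] [b|] [c|] //=; rewrite assocT. Qed.
Lemma catv0 x : catv x None = x. Proof. by case: x. Qed.

Lemma foldl_mulT (a s : T) (v : seq X') :
  foldl (fun s b => mulT s b.2) (mulT a s) v = mulT a (foldl (fun s b => mulT s b.2) s v).
Proof. by elim: v s => //= b v IH s; rewrite -assocT IH. Qed.

Lemma valT_cons b v : valT (b :: v) = catv (Some b.2) (valT v).
Proof. by case: v => //= c v; rewrite foldl_mulT. Qed.

Lemma dl_t pu o b : dl (true, pu, o) (Some b) = (true, pu, catv (Some b.2) o).
Proof. by []. Qed.
Lemma dl_f pu o b : dl (false, pu, o) (Some b) = (false, catv pu (Some b.2), o).
Proof. by []. Qed.

Lemma foldl_cons (A B : Type) (f : A -> B -> A) a b s : foldl f a (b :: s) = foldl f (f a b) s.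
Proof. by []. Qed.

Lemma run_u u o pv : foldl dl (false, o, pv) (map Some u) = (false, catv o (valT u), pv).
Proof.
elim: u o => [|b u IH] o; first by rewrite /= catv0.
by rewrite valT_cons map_cons foldl_cons dl_f IH catvA.
Qed.

Lemma run_v v pu o : foldl dl (true, pu, o) (rev (map Some v)) = (true, pu, catv (valT v) o).
Proof.
elim: v o => [|b v IH] o //.
by rewrite valT_cons map_cons rev_cons -cats1 foldl_cat IH foldl_cons dl_t catvA.
Qed.

Lemma run_wp u v : foldl dl d0 (map Some u ++ None :: rev (map Some v)) = (true, valT u, valT v).
Proof. by rewrite foldl_cat run_u /= run_v catv0. Qed.

Lemma foldl_prod (s : S) (t : T) (u : seq X') :
  foldl (fun x b => prod_mul mulS mulT x (phi' b)) (s, t) u =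
  (foldl (fun x b => mulS x (phi b)) s (map fst u), foldl (fun x b => mulT x b.2) t u).
Proof. by elim: u s t => //= b u IH s t; rewrite IH. Qed.

Lemma wv_prod u : word_val (prod_mul mulS mulT) phi' u =
  match word_val mulS phi (map fst u), valT u with
  | Some s, Some t => Some (s, t) | _, _ => None end.
Proof. by case: u => //= b u; rewrite foldl_prod. Qed.

Lemma wv_prod_eq u v : (word_val (prod_mul mulS mulT) phi' u = word_val (prod_mul mulS mulT) phi' v)
  <-> word_val mulS phi (map fst u) = word_val mulS phi (map fst v) /\ valT u = valT v.
Proof.
rewrite !wv_prod.
case: u => [|a u]; case: v => [|b v] /=; split; try by case.
all: try by move=> [].
- by [].
- by case=> -> ->.
- by case=> [[->] [->]].
Qed.

Lemma unSome (y : seq (option X')) (z : seq X) : map hh y = map Some z ->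
  exists y', y = map Some y' /\ map fst y' = z.
Proof.
elim: y z => [|c y IH] [|a z] //=; first by exists [::].
case: c => // b [Ea /IH [y' [-> <-]]].
by exists (b :: y'); rewrite /= Ea.
Qed.

Lemma wp_equiv x : word_problem (prod_mul mulS mulT) phi' x <->
  word_problem mulS phi (map hh x) /\ finQ (foldl dl d0 x).
Proof.
split.
- case=> u [v [Hu [Hv [-> /wv_prod_eq [E1 E2]]]]].
  split; last by rewrite run_wp /finQ /= E2 eqxx.
  exists (map fst u), (map fst v); split; first by case: u Hu {E1 E2}.
  split; first by case: v Hv {E1 E2}.
  split => //.
  by rewrite map_cat /= map_rev -!map_comp.
- case=> [[u' [v' [Hu [Hv [Ex Ew]]]]] F].
  have [x1 [x2' [Ex' E1 E2]]] := map_eq_app Ex.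
  case: x2' Ex' E2 => // [[c|] x2] // Ex' [E2].
  have := E2; move=> /(congr1 (@rev _)); rewrite -map_rev revK => E3.
  have [v [Ev Ev']] := unSome E3.
  have [u [Eu Eu']] := unSome E1.
  have Exx : x = map Some u ++ None :: rev (map Some v).
    by rewrite Ex' Eu -Ev revK.
  exists u, v; split; first by move=> Eu0; apply: Hu; rewrite -Eu' Eu0.
  split; first by move=> Ev0; apply: Hv; rewrite -Ev' Ev0.
  split => //.
  apply/wv_prod_eq; rewrite Eu' Ev'; split => //.
  by move: F; rewrite Exx run_wp /finQ /= => /eqP.
Qed.

Lemma foldl_map' (A B C : Type) (f : A -> B) (g : C -> B -> C) c s :
  foldl g c (map f s) = foldl (fun x y => g x (f y)) c s.
Proof. by elim: s c => //= a s IH c. Qed.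

Lemma wv_map (A C B : Type) (mul : B -> B -> B) (f : A -> C) (g : C -> B) w :
  word_val mul g (map f w) = word_val mul (g \o f) w.
Proof. by case: w => //= a w; rewrite foldl_map'. Qed.

Lemma prod_n n t : exists ts : seq T, size ts = n.+1 /\ word_val mulT id ts = Some t.
Proof.
elim: n t => [|n IH] t; first by exists [:: t].
have [a [b ->]] := decT t.
have [ts [Hs Hv]] := IH a.
exists (rcons ts b); rewrite size_rcons Hs; split => //.
by case: ts Hs Hv => //= c ts _ [<-]; rewrite foldl_rcons.
Qed.

Lemma gen_prod : generates mulS phi -> generates (prod_mul mulS mulT) phi'.
Proof.
case=> Hinj Hsur; split.
  by case=> a t [b t'] [/Hinj -> ->].
case=> s t.
have [w Hw] := Hsur s.
case: w Hw => // a w Hw.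
have [ts [Hs Hv]] := prod_n (size w) t.
exists (zip (a :: w) ts); rewrite wv_prod.
have Hz : size (a :: w) = size ts by rewrite Hs.
have -> : map fst (zip (a :: w) ts) = a :: w by apply: unzip1_zip; rewrite Hz.
rewrite Hw.
have -> : valT (zip (a :: w) ts) = word_val mulT id (map snd (zip (a :: w) ts)).
  by rewrite wv_map.
have -> : map snd (zip (a :: w) ts) = ts by apply: unzip2_zip; rewrite Hz.
by rewrite Hv.
Qed.

End Semi.

Lemma cf_ext (A : finType) (L1 L2 : seq A -> Prop) :
  (forall w, L1 w <-> L2 w) -> context_free L1 -> context_free L2.
Proof. by move=> E [G HG]; exists G => w; rewrite HG. Qed.

Lemma dcf_ext (A : finType) (L1 L2 : seq A -> Prop) :
  (forall w, L1 w <-> L2 w) -> det_context_free L1 -> det_context_free L2.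
Proof. by move=> E [G HG]; exists G => w; rewrite HG. Qed.

Theorem mainTheorem4 (S : Type) (mulS : S -> S -> S) (assocS : associative mulS)
    (T : finType) (mulT : T -> T -> T) (assocT : associative mulT)
    (decT : forall t : T, exists a b : T, t = mulT a b) :
  (U_CF mulS -> U_CF (prod_mul mulS mulT)) /\
  (U_DCF mulS -> U_DCF (prod_mul mulS mulT)).
Proof.
split.
- case=> X [phi [Hg Hcf]]; exists (X' T X), (phi' phi); split.
    exact: (gen_prod (mulT:=mulT) decT Hg).
  have := cf_prod (@hh T X) (@dl T mulT X) (d0 T) (@finQ T) Hcf.
  apply: cf_ext => w; symmetry; exact: (wp_equiv _ assocT).
- case=> X [phi [Hg Hcf]]; exists (X' T X), (phi' phi); split.
    exact: (gen_prod (mulT:=mulT) decT Hg).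
  have := dcf_prod (@hh T X) (@dl T mulT X) (d0 T) (@finQ T) Hcf.
  apply: dcf_ext => w; symmetry; exact: (wp_equiv _ assocT).
Qed.
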